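(* A class of finite graphs has bounded clique-width (i.e., there is a constant $c$ with $\mathrm{cw}(G)\le c$ for all $G$ in the class) if and only if it has bounded multi-clique-width.
   Context: A $k$-expression is built from: atoms $i(v)$ creating a vertex $v$ with label $i\in\{1,\dots,k\}$; $\eta_{i,j}$ ($i\neq j$) adding an edge between every vertex labeled $i$ and every vertex labeled $j$; $\rho_{i\to j}$ changing every label $i$ to $j$; and $\oplus$, disjoint union. The generated graph is obtained by deleting labels. The clique-width $\mathrm{cw}(G)$ is the smallest $k$ such that $G$ is generated by a $k$-expression. A multi-$k$-expression is built as follows, where each vertex carries a (possibly empty) set of labels from $\{1,\dots,k\}$: atoms $m\langle i_1,\dots,i_\ell\rangle$ (with $m$ a positive integer and $i_1<\dots<i_\ell\le k$, possibly $\ell=0$) create $m$ vertices, each with label set $\{i_1,\dots,i_\ell\}$; $\eta_{i,j}$ creates an edge between every vertex having label $i$ and every vertex having label $j$, allowed only when no vertex has both labels $i$ and $j$; $\rho_{i\to S}$ for $S\subseteq\{1,\dots,k\}$ replaces label $i$ by the set $S$ (a vertex with label set $S'\ni i$ gets $(S'\setminus\{i\})\cup S$); $\varepsilon_i$ deletes label $i$ from all vertices; $\oplus$ is disjoint union. The generated graph is obtained by deleting all labels. The multi-clique-width $\mathrm{mcw}(G)$ is the smallest $k$ such that $G$ is generated by a multi-$k$-expression. *)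

(* Defs.v *)
From mathcomp Require Import all_boot.
Set Implicit Arguments. Unset Strict Implicit. Unset Printing Implicit Defensive.

Record graph := Graph {
  gn : nat;
  gadj : rel 'I_gn;
  gadj_sym : symmetric gadj;
  gadj_irr : irreflexive gadj }.

(** A (generic) vertex-labelled graph on vertices 0..n-1 (values outside the
    range are irrelevant). *)

Inductive kexp :=
  | KAtom (i : nat)
  | KEta (i j : nat) (e : kexp)
  | KRho (i j : nat) (e : kexp)
  | KUnion (e1 e2 : kexp).

Fixpoint keval (e : kexp) : nat * (nat -> nat) * (nat -> nat -> bool) :=
  match e with
  | KAtom i => (1, fun _ => i, fun _ _ => false)
  | KEta i j e =>
      let: (n, lab, adj) := keval e in
      (n, lab, fun u v => adj u v ||
         [&& u < n, v < n &
             ((lab u == i) && (lab v == j)) || ((lab u == j) && (lab v == i))])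
  | KRho i j e =>
      let: (n, lab, adj) := keval e in
      (n, fun v => if lab v == i then j else lab v, adj)
  | KUnion e1 e2 =>
      let: (n1, lab1, adj1) := keval e1 in
      let: (n2, lab2, adj2) := keval e2 in
      (n1 + n2,
       fun v => if v < n1 then lab1 v else lab2 (v - n1),
       fun u v => if (u < n1) && (v < n1) then adj1 u v
                  else if (n1 <= u) && (n1 <= v) then adj2 (u - n1) (v - n1)
                  else false)
  end.

Definition in_labels (k i : nat) : bool := (1 <= i) && (i <= k).

Fixpoint kexp_ok (k : nat) (e : kexp) : bool :=
  match e with
  | KAtom i => in_labels k i
  | KEta i j e => [&& in_labels k i, in_labels k j, i != j & kexp_ok k e]
  | KRho i j e => [&& in_labels k i, in_labels k j & kexp_ok k e]
  | KUnion e1 e2 => kexp_ok k e1 && kexp_ok k e2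
  end.

Definition iso_to (n : nat) (adj : nat -> nat -> bool) (G : graph) : Prop :=
  n = gn G /\
  exists f : 'I_(gn G) -> nat,
    injective f /\ (forall x, f x < n) /\
    (forall x y, gadj x y = adj (f x) (f y)).

Definition kgenerates (e : kexp) (G : graph) : Prop :=
  let: (n, _, adj) := keval e in iso_to n adj G.

Definition cw_le (G : graph) (c : nat) : Prop :=
  exists k e, k <= c /\ kexp_ok k e /\ kgenerates e G.

Inductive mexp :=
  | MAtom (m : nat) (L : seq nat)
  | MEta (i j : nat) (e : mexp)
  | MRho (i : nat) (L : seq nat) (e : mexp)
  | MEps (i : nat) (e : mexp)
  | MUnion (e1 e2 : mexp).

(** semantics: (number of vertices, lab v l = "vertex v carries label l", adjacency) *)
Fixpoint meval (e : mexp) : nat * (nat -> nat -> bool) * (nat -> nat -> bool) :=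
  match e with
  | MAtom m L => (m, fun _ l => l \in L, fun _ _ => false)
  | MEta i j e =>
      let: (n, lab, adj) := meval e in
      (n, lab, fun u v => adj u v ||
         [&& u < n, v < n &
             (lab u i && lab v j) || (lab u j && lab v i)])
  | MRho i L e =>
      let: (n, lab, adj) := meval e in
      (n, fun v l => if lab v i then ((l != i) && lab v l) || (l \in L)
                     else lab v l, adj)
  | MEps i e =>
      let: (n, lab, adj) := meval e in
      (n, fun v l => (l != i) && lab v l, adj)
  | MUnion e1 e2 =>
      let: (n1, lab1, adj1) := meval e1 in
      let: (n2, lab2, adj2) := meval e2 in
      (n1 + n2,
       fun v => if v < n1 then lab1 v else lab2 (v - n1),
       fun u v => if (u < n1) && (v < n1) then adj1 u v
                  else if (n1 <= u) && (n1 <= v) then adj2 (u - n1) (v - n1)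
                  else false)
  end.

Fixpoint mexp_ok (k : nat) (e : mexp) : bool :=
  match e with
  | MAtom m L => (0 < m) && all (in_labels k) L
  | MEta i j e =>
      let: (n, lab, _) := meval e in
      [&& in_labels k i, in_labels k j, i != j,
          [forall v : 'I_n, ~~ (lab v i && lab v j)] & mexp_ok k e]
  | MRho i L e => [&& in_labels k i, all (in_labels k) L & mexp_ok k e]
  | MEps i e => in_labels k i && mexp_ok k e
  | MUnion e1 e2 => mexp_ok k e1 && mexp_ok k e2
  end.

Definition mgenerates (e : mexp) (G : graph) : Prop :=
  let: (n, _, adj) := meval e in iso_to n adj G.

Definition mcw_le (G : graph) (c : nat) : Prop :=
  exists k e, k <= c /\ mexp_ok k e /\ mgenerates e G.

Definition graph_class := graph -> Prop.

Definition bounded_cw (C : graph_class) : Prop :=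
  exists c, forall G, C G -> cw_le G c.

Definition bounded_mcw (C : graph_class) : Prop :=
  exists c, forall G, C G -> mcw_le G c.

(* Main.v *)
Require Import Defs.
From mathcomp Require Import all_boot.
Set Implicit Arguments. Unset Strict Implicit. Unset Printing Implicit Defensive.

Fixpoint k2m (e : kexp) : mexp :=
  match e with
  | KAtom i => MAtom 1 [:: i]
  | KEta i j e => MEta i j (k2m e)
  | KRho i j e => MRho i [:: j] (k2m e)
  | KUnion e1 e2 => MUnion (k2m e1) (k2m e2)
  end.

Lemma k2m_spec k e n lab adj : keval e = (n, lab, adj) -> kexp_ok k e ->
  exists mlab madj, meval (k2m e) = (n, mlab, madj) /\ mexp_ok k (k2m e) /\
   (forall u v, madj u v = adj u v) /\ (forall v l, v < n -> mlab v l = (l == lab v)).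
Proof.
elim: e n lab adj => [i|i j e IH|i j e IH|e1 IH1 e2 IH2] n lab adj /=.
- case=> <- <- <- Hi; do 2 eexists; split; first reflexivity.
  by rewrite Hi; split=> //; split=> // v l _; rewrite inE.
- case E: (keval e) => [[n0 lab0] adj0]; case=> <- <- <-.
  case/and4P=> Hi Hj Hij Hok.
  have [mlab [madj [Em [Okm [Ha Hl]]]]] := IH _ _ _ E Hok.
  rewrite Em; do 2 eexists; split; first reflexivity.
  split.
    rewrite Hi Hj Hij Okm /= andbT; apply/forallP=> v.
    rewrite !Hl //; apply/negP=> /andP[/eqP a /eqP b].
    by move: Hij; rewrite a b eqxx.
  split=> [u v|v l Hv]; last exact: Hl.
  rewrite Ha; case: (adj0 u v) => //=.
  case Hu: (u < n0) => //=; case Hv: (v < n0) => //=.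
  by rewrite !Hl // ![_ == lab0 _]eq_sym.
- case E: (keval e) => [[n0 lab0] adj0]; case=> <- <- <-.
  case/and3P=> Hi Hj Hok.
  have [mlab [madj [Em [Okm [Ha Hl]]]]] := IH _ _ _ E Hok.
  rewrite Em; do 2 eexists; split; first reflexivity.
  rewrite /= Hi Okm /= Hj; split=> //; split=> // v l Hv.
  rewrite !Hl // inE [i == _]eq_sym; case: (lab0 v =P i) => [->|_] //.
  by rewrite andNb.
- case E1: (keval e1) => [[n1 lab1] adj1]; case E2: (keval e2) => [[n2 lab2] adj2].
  case=> <- <- <-; case/andP=> Ok1 Ok2.
  have [mlab1 [madj1 [Em1 [Okm1 [Ha1 Hl1]]]]] := IH1 _ _ _ E1 Ok1.
  have [mlab2 [madj2 [Em2 [Okm2 [Ha2 Hl2]]]]] := IH2 _ _ _ E2 Ok2.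
  rewrite Em1 Em2; do 2 eexists; split; first reflexivity.
  rewrite Okm1 Okm2; split=> //; split=> [u v|v l Hv].
    by rewrite Ha1 Ha2.
  case: ifP => Hv1; first exact: Hl1.
  apply: Hl2; rewrite ltn_subLR //; by rewrite leqNgt Hv1.
Qed.

Definition step (x : nat) (p : nat * nat) := if x == p.1 then p.2 else x.
Definition rhos (ps : seq (nat * nat)) (e : kexp) :=
  foldl (fun e p => KRho p.1 p.2 e) e ps.
Definition etas (ps : seq (nat * nat)) (e : kexp) :=
  foldl (fun e p => KEta p.1 p.2 e) e ps.

Lemma keval_rhos ps e n lab adj : keval e = (n, lab, adj) ->
  keval (rhos ps e) = (n, fun v => foldl step (lab v) ps, adj).
Proof.
elim: ps e lab => [|p ps IH] e lab H /=; first by rewrite /rhos /= H.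
rewrite /rhos /=; apply: (IH _ (fun v => step (lab v) p)).
by rewrite /= H.
Qed.

Lemma ok_rhos K ps e : kexp_ok K (rhos ps e) =
  kexp_ok K e && all (fun p => in_labels K p.1 && in_labels K p.2) ps.
Proof.
elim: ps e => [|p ps IH] e /=; first by rewrite andbT.
rewrite /rhos /= -/(rhos ps _) IH /=.
by case: (in_labels K p.1); case: (in_labels K p.2); case: (kexp_ok K e);
  rewrite ?andbF.
Qed.

Lemma ok_etas K ps e : kexp_ok K (etas ps e) =
  kexp_ok K e && all (fun p => [&& in_labels K p.1, in_labels K p.2 & p.1 != p.2]) ps.
Proof.
elim: ps e => [|p ps IH] e /=; first by rewrite andbT.
rewrite /etas /= -/(etas ps _) IH /=.
by case: (in_labels K p.1); case: (in_labels K p.2); case: (p.1 != p.2);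
  case: (kexp_ok K e); rewrite ?andbF.
Qed.

Lemma keval_etas ps e n lab adj : keval e = (n, lab, adj) ->
  exists adj', keval (etas ps e) = (n, lab, adj') /\ forall u v, adj' u v =
   adj u v || [&& u < n, v < n & has (fun p => ((lab u == p.1) && (lab v == p.2))
                   || ((lab u == p.2) && (lab v == p.1))) ps].
Proof.
elim: ps e adj => [|p ps IH] e adj H /=.
  by exists adj; split; [rewrite /etas /= H| move=> u v; rewrite !andbF orbF].
have H1 : keval (KEta p.1 p.2 e) = (n, lab, fun u v => adj u v ||
         [&& u < n, v < n &
             ((lab u == p.1) && (lab v == p.2)) || ((lab u == p.2) && (lab v == p.1))]).
  by rewrite /= H.
have [adj' [E Ha]] := IH _ _ H1.
exists adj'; split; first by rewrite /etas /= -/(etas ps _) E.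
move=> u v; rewrite Ha.
by case: (adj u v); case: (u < n); case: (v < n).
Qed.

Lemma foldl_step_notin ps x : x \notin map fst ps -> foldl step x ps = x.
Proof.
elim: ps x => [|p ps IH] x //=; rewrite inE negb_or => /andP[ne nin].
by rewrite /step (negbTE ne) IH.
Qed.

Lemma foldl_step_in ps a b : uniq (map fst ps) ->
  (forall p, p \in ps -> p.2 \notin map fst ps) -> (a, b) \in ps ->
  foldl step a ps = b.
Proof.
elim: ps => [|p ps IH] //= /andP[nin u] Ht; rewrite inE => /orP[/eqP E|Hin].
  subst p; rewrite /step eqxx /= foldl_step_notin //.
  by have := Ht _ (mem_head _ _); rewrite /= inE negb_or => /andP[].
have ne : a != p.1.
  by apply: contraNneq nin => <-; apply/mapP; exists (a, b).
rewrite /step (negbTE ne) IH // => q Hq.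
by have := Ht q; rewrite inE Hq orbT => /(_ isT); rewrite inE negb_or => /andP[].
Qed.

Section Codes.
Variable k : nat.
Definition NN := #|{set 'I_k}|.
Definition code (A : {set 'I_k}) : nat := (enum_rank A).+1.

Lemma code_inj : injective code.
Proof. by move=> A T [] /ord_inj /enum_rank_inj. Qed.

Lemma code_ge1 A : 0 < code A. Proof. by []. Qed.
Lemma code_le A : code A <= NN.
Proof. exact: ltn_ord. Qed.

Definition ph1 (g : {set 'I_k} -> {set 'I_k}) :=
  [seq (code A, code (g A) + NN) | A <- enum {set 'I_k}].
Definition ph2 := [seq (code A + NN, code A) | A <- enum {set 'I_k}].
Definition relab g t := rhos ph2 (rhos (ph1 g) t).

Lemma ph1_step g A : foldl step (code A) (ph1 g) = code (g A) + NN.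
Proof.
apply: foldl_step_in.
- rewrite /ph1 -map_comp map_inj_uniq ?enum_uniq //; exact: code_inj.
- move=> p /mapP [T _ ->] /=; apply/negP => /mapP [q /mapP [U _ ->]] /=.
  move=> E; have := code_le U; rewrite -E.
  by rewrite leqNgt -{1}[NN]add0n ltn_add2r code_ge1.
- by apply/mapP; exists A => //; rewrite mem_enum.
Qed.

Lemma ph2_step A : foldl step (code A + NN) ph2 = code A.
Proof.
apply: foldl_step_in.
- rewrite /ph2 -map_comp map_inj_uniq ?enum_uniq //.
  by move=> X Y /= /addIn /code_inj.
- move=> p /mapP [T _ ->] /=; apply/negP => /mapP [q /mapP [U _ ->]] /= E.
  have := code_le T; rewrite E.
  by rewrite leqNgt -{1}[NN]add0n ltn_add2r code_ge1.
- by apply/mapP; exists A => //; rewrite mem_enum.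
Qed.

Lemma keval_relab g t n klab adj : keval t = (n, klab, adj) ->
  exists klab', keval (relab g t) = (n, klab', adj) /\
   forall v A, klab v = code A -> klab' v = code (g A).
Proof.
move=> H; eexists; split.
  by apply: keval_rhos; apply: keval_rhos; exact: H.
by move=> v A /= ->; rewrite ph1_step ph2_step.
Qed.

Lemma in_code A : in_labels (2 * NN) (code A).
Proof.
by rewrite /in_labels code_ge1 /= (leq_trans (code_le A)) // mul2n -addnn leq_addr.
Qed.

Lemma in_codeN A : in_labels (2 * NN) (code A + NN).
Proof.
by rewrite /in_labels addn_gt0 code_ge1 /= mul2n -addnn leq_add2r code_le.
Qed.

Lemma ok_relab g t : kexp_ok (2 * NN) t -> kexp_ok (2 * NN) (relab g t).
Proof.
move=> H; rewrite /relab !ok_rhos H /=; apply/andP; split.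
  by apply/allP => p /mapP [A _ ->] /=; rewrite in_code in_codeN.
by apply/allP => p /mapP [A _ ->] /=; rewrite in_code in_codeN.
Qed.

Lemma NN_E : NN = 2 ^ k.
Proof. by rewrite /NN -cardsT -powersetT card_powerset cardsT card_ord. Qed.

End Codes.

Section M2K.
Variable k : nat.
Definition mem_lab (A : {set 'I_k}) i := [exists x : 'I_k, (x \in A) && (x.+1 == i)].
Definition setof (lab : nat -> bool) := [set x : 'I_k | lab x.+1].

Lemma mem_labE lab i : in_labels k i -> mem_lab (setof lab) i = lab i.
Proof.
case/andP; case: i => // i _ Hi; apply/existsP/idP.
  by case=> x /andP []; rewrite inE => H /eqP [<-].
by move=> H; exists (Ordinal Hi); rewrite inE H eqxx.
Qed.

Fixpoint katoms c m := match m with 0 => KAtom c | m'.+1 => KUnion (KAtom c) (katoms c m') end.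

Lemma keval_katoms c m : exists klab adj, keval (katoms c m) = (m.+1, klab, adj) /\
  (forall v, klab v = c) /\ (forall u v, adj u v = false).
Proof.
elim: m => [|m [klab [adj [E [Hl Ha]]]]] /=; first by do 2 eexists; split.
rewrite E; do 2 eexists; split; first reflexivity.
split=> [v|u v]; first by case: ifP.
by rewrite Ha; case: ifP => //; case: ifP.
Qed.

Lemma ok_katoms K c m : kexp_ok K (katoms c m) = in_labels K c.
Proof. by elim: m => //= m ->; rewrite andbb. Qed.

Definition psS i j := [seq p <- [seq (X, Y) | X <- enum {set 'I_k}, Y <- enum {set 'I_k}]
   | [&& mem_lab p.1 i, mem_lab p.2 j & p.1 != p.2]].
Definition ps i j := [seq (code p.1, code p.2) | p <- psS i j].

Definition gRho i (L : seq nat) (A : {set 'I_k}) :=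
  if mem_lab A i then [set x : 'I_k | ((x.+1 != i) && (x \in A)) || (x.+1 \in L)] else A.
Definition gEps i (A : {set 'I_k}) := [set x in A | x.+1 != i].

Lemma m2k e n lab adj : meval e = (n, lab, adj) -> mexp_ok k e ->
  exists t klab adj', keval t = (n, klab, adj') /\ kexp_ok (2 * NN k) t /\
    (forall u v, adj' u v = adj u v) /\
    (forall v, v < n -> klab v = code (setof (lab v))).
Proof.
elim: e n lab adj => [m L|i j e IH|i L e IH|i e IH|e1 IH1 e2 IH2] n lab adj /=.
- case=> <- <- <- /andP [Hm HL].
  have [klab [adj' [E [Hl Ha]]]] := keval_katoms (code (setof (fun l => l \in L))) m.-1.
  exists (katoms (code (setof (fun l => l \in L))) m.-1), klab, adj'.
  rewrite prednK // in E; split=> //; split; first by rewrite ok_katoms in_code.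
  by split=> // v _; rewrite Hl.
- case E: (meval e) => [[n0 lab0] adj0]; case=> <- <- <-.
  case/and5P=> Hi Hj Hij /forallP Hno Hok.
  have [t [klab [adj' [Et [Okt [Ha Hl]]]]]] := IH _ _ _ E Hok.
  have [adj'' [Ee Hae]] := keval_etas (ps i j) Et.
  exists (etas (ps i j) t), klab, adj''; split=> //; split.
    rewrite ok_etas Okt /=; apply/allP => p /mapP [q].
    rewrite mem_filter => /andP [/and3P [_ _ Hq] _] -> /=.
    by rewrite !in_code /=; apply: contra Hq => /eqP /code_inj ->.
  split=> // u v; rewrite Hae Ha; case: (adj0 u v) => //=.
  case Hu: (u < n0) => //=; case Hv: (v < n0) => //=.
  rewrite (Hl u Hu) (Hl v Hv).
  have Hnu := Hno (Ordinal Hu); have Hnv := Hno (Ordinal Hv); simpl in Hnu, Hnv.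
  rewrite -(mem_labE (lab0 u) Hi) -(mem_labE (lab0 u) Hj) in Hnu.
  rewrite -(mem_labE (lab0 v) Hi) -(mem_labE (lab0 v) Hj) in Hnv.
  rewrite -(mem_labE (lab0 u) Hi) -(mem_labE (lab0 u) Hj).
  rewrite -(mem_labE (lab0 v) Hi) -(mem_labE (lab0 v) Hj).
  set U := setof (lab0 u) in Hnu *; set V := setof (lab0 v) in Hnv *.
  apply/hasP/idP.
    case=> p /mapP [q]; rewrite mem_filter => /andP [/and3P [q1 q2 qne] _] -> /=.
    by case/orP=> /andP [/eqP /code_inj EU /eqP /code_inj EV];
      rewrite EU EV q1 q2 /= ?orbT.
  have Hall : forall X Y : {set 'I_k}, (X, Y) \in [seq (X, Y) | X <- enum {set 'I_k}, Y <- enum {set 'I_k}].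
    by move=> X Y; apply: allpairs_f; rewrite mem_enum.
  case/orP => /andP [a b].
    exists (code U, code V); last by rewrite /= !eqxx.
    apply/mapP; exists (U, V) => //; rewrite mem_filter Hall /= a b andbT.
    by apply/eqP => EUV; rewrite -EUV in b; rewrite a b in Hnu.
  exists (code V, code U); last by rewrite /= !eqxx orbT.
  apply/mapP; exists (V, U) => //; rewrite mem_filter Hall /= a b andbT.
  by apply/eqP => EUV; rewrite -EUV in a; rewrite a b in Hnv.
- case E: (meval e) => [[n0 lab0] adj0]; case=> <- <- <-.
  case/and3P=> Hi HL Hok.
  have [t [klab [adj' [Et [Okt [Ha Hl]]]]]] := IH _ _ _ E Hok.
  have [klab' [Er Hr]] := keval_relab (gRho i L) Et.
  exists (relab (gRho i L) t), klab', adj'; split=> //; split; first exact: ok_relab.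
  split=> // v Hv; rewrite (Hr v _ (Hl v Hv)); congr code.
  rewrite /gRho mem_labE //; case: (lab0 v i) => //.
  by apply/setP => x; rewrite !inE.
- case E: (meval e) => [[n0 lab0] adj0]; case=> <- <- <-.
  case/andP=> Hi Hok.
  have [t [klab [adj' [Et [Okt [Ha Hl]]]]]] := IH _ _ _ E Hok.
  have [klab' [Er Hr]] := keval_relab (gEps i) Et.
  exists (relab (gEps i) t), klab', adj'; split=> //; split; first exact: ok_relab.
  split=> // v Hv; rewrite (Hr v _ (Hl v Hv)); congr code.
  by apply/setP => x; rewrite !inE andbC.
- case E1: (meval e1) => [[n1 lab1] adj1]; case E2: (meval e2) => [[n2 lab2] adj2].
  case=> <- <- <-; case/andP=> Ok1 Ok2.
  have [t1 [klab1 [adj1' [Et1 [Okt1 [Ha1 Hl1]]]]]] := IH1 _ _ _ E1 Ok1.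
  have [t2 [klab2 [adj2' [Et2 [Okt2 [Ha2 Hl2]]]]]] := IH2 _ _ _ E2 Ok2.
  exists (KUnion t1 t2); do 2 eexists; split; first by rewrite /= Et1 Et2.
  split; first by rewrite /= Okt1 Okt2.
  split=> [u v|v Hv]; first by rewrite Ha1 Ha2.
  case: ifP => Hv1; first exact: Hl1.
  apply: Hl2; rewrite ltn_subLR //; by rewrite leqNgt Hv1.
Qed.
End M2K.

Lemma iso_to_ext n a b G : (forall u v, a u v = b u v) -> iso_to n a G -> iso_to n b G.
Proof.
move=> H [En [f [fi [fr fa]]]]; split=> //; exists f; split=> //; split=> // x y.
by rewrite fa H.
Qed.

Theorem mainTheorem3 (C : graph_class) : bounded_cw C <-> bounded_mcw C.
Proof.
split=> [[c Hc]|[c Hc]].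
  exists c => G /Hc [k [e [Hk [Ok Hg]]]]; exists k, (k2m e); split=> //.
  move: Hg; rewrite /kgenerates /mgenerates.
  case E: (keval e) => [[n lab] adj] Hg.
  have [mlab [madj [Em [Okm [Ha _]]]]] := k2m_spec E Ok.
  rewrite Em; split=> //; apply: iso_to_ext Hg => u v; by rewrite Ha.
exists (2 * 2 ^ c) => G /Hc [k [e [Hk [Ok Hg]]]].
move: Hg; rewrite /mgenerates; case E: (meval e) => [[n lab] adj] Hg.
have [t [klab [adj' [Et [Okt [Ha _]]]]]] := m2k E Ok.
exists (2 * NN k), t; split; last split=> //.
  by rewrite NN_E leq_mul2l leq_pexp2l ?orbT.
rewrite /kgenerates Et; apply: iso_to_ext Hg => u v; by rewrite Ha.
Qed.
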